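(* Let $ABC$ be a triangle with circumcenter $O$, orthocenter $H$, and orthic triangle $A_HB_HC_H$ (the feet of the altitudes from $A, B, C$). Let $A^*, B^*, C^*$ be the feet of the perpendiculars from $O$ to the lines $AH, BH, CH$ respectively. If line $AO$ meets line $B_HC_H$ at $J$, then the orthocenter $H^*$ of triangle $A^*B^*C^*$ lies on line $A_HJ$. *)

(* Defs.v *)
From mathcomp Require Import all_boot all_order all_algebra.
Set Implicit Arguments. Unset Strict Implicit. Unset Printing Implicit Defensive.
Import Order.TTheory GRing.Theory Num.Theory.
Local Open Scope ring_scope.

Definition point (R : realFieldType) := (R * R)%type.

Section Geom.
Variable R : realFieldType.
Implicit Types P Q A B C : point R.

Definition vsub P Q : point R := (P.1 - Q.1, P.2 - Q.2).
Definition dot P Q : R := P.1 * Q.1 + P.2 * Q.2.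
Definition cross P Q : R := P.1 * Q.2 - P.2 * Q.1.

(* P, Q, X collinear (X lies on line PQ when P <> Q) *)
Definition collinear P Q X : Prop := cross (vsub Q P) (vsub X P) = 0.

Definition sqdist P Q : R := dot (vsub P Q) (vsub P Q).

(* foot of the perpendicular from P onto line AB (A <> B) *)
Definition foot P A B : point R :=
  let u := vsub B A in
  let t := dot (vsub P A) u / dot u u in
  (A.1 + t * u.1, A.2 + t * u.2).

Definition is_circumcenter O A B C : Prop :=
  sqdist O A = sqdist O B /\ sqdist O A = sqdist O C.

Definition is_orthocenter H A B C : Prop :=
  dot (vsub H A) (vsub C B) = 0 /\ dot (vsub H B) (vsub C A) = 0 /\
  dot (vsub H C) (vsub B A) = 0.
End Geom.

(* Main.v *)
Require Import Defs.
From mathcomp Require Import all_boot all_order all_algebra.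
From mathcomp Require Import ring lra.
Import Order.TTheory GRing.Theory Num.Theory.
Local Open Scope ring_scope.

Lemma pt_eq (R : realFieldType) (P Q : point R) : P.1 = Q.1 -> P.2 = Q.2 -> P = Q.
Proof. by case: P Q => [? ?] [? ?] /= -> ->. Qed.

Lemma sq2_eq0 (R : realFieldType) (x y : R) : x * x + y * y = 0 -> x = 0 /\ y = 0.
Proof.
move=> h.
have hx : x * x = 0 by nra.
have hy : y * y = 0 by nra.
by move/eqP: hx; move/eqP: hy; rewrite !mulf_eq0 !orbb => /eqP -> /eqP ->.
Qed.

(* dot^2 + cross^2 = |u|^2 |v|^2 *)
Lemma perp_cross0 (R : realFieldType) (u v : point R) :
  dot u v = 0 -> cross u v = 0 -> u = (0,0) \/ v = (0,0).
Proof.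
move=> hd hc.
have : dot u u * dot v v = 0.
  have e : dot u u * dot v v = dot u v * dot u v + cross u v * cross u v by rewrite /dot /cross; ring.
  by rewrite e hd hc !mulr0 addr0.
move/eqP; rewrite mulf_eq0 => /orP [] /eqP /sq2_eq0 [h1 h2].
  by left; apply: pt_eq.
by right; apply: pt_eq.
Qed.

Lemma dot_uniq (R : realFieldType) (D u v : point R) :
  dot D u = 0 -> dot D v = 0 -> cross u v != 0 -> D = (0,0).
Proof.
move=> h1 h2 hc.
have e1 : D.1 * cross u v = v.2 * dot D u - u.2 * dot D v by rewrite /dot /cross; ring.
have e2 : D.2 * cross u v = u.1 * dot D v - v.1 * dot D u by rewrite /dot /cross; ring.
rewrite h1 h2 !mulr0 subr0 in e1 e2.
apply: pt_eq => /=.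
  by move/eqP: e1; rewrite mulf_eq0 (negbTE hc) orbF => /eqP.
by move/eqP: e2; rewrite mulf_eq0 (negbTE hc) orbF => /eqP.
Qed.

Lemma line_inter (R : realFieldType) (J P Q u v : point R) :
  cross u (vsub J P) = 0 -> cross v (vsub J Q) = 0 -> cross v u != 0 ->
  J = (P.1 + cross v (vsub Q P) / cross v u * u.1, P.2 + cross v (vsub Q P) / cross v u * u.2).
Proof.
move=> h1 h2 hc.
set l := cross v (vsub Q P) / cross v u.
have hl : l * cross v u = cross v (vsub Q P) by rewrite /l mulfVK.
set D := vsub J (P.1 + l * u.1, P.2 + l * u.2).
have d1 : cross u D = 0 by rewrite -h1 /D /cross /vsub /=; ring.
have d2 : cross v D = 0.
  rewrite -h2 /D /cross /vsub /=.
  have -> : v.1 * (J.2 - (P.2 + l * u.2)) - v.2 * (J.1 - (P.1 + l * u.1)) =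
     v.1 * (J.2 - Q.2) - v.2 * (J.1 - Q.1) + (cross v (vsub Q P) - l * cross v u).
    by rewrite /cross /vsub /=; ring.
  by rewrite hl subrr addr0.
have : D = (0,0).
  apply: (@dot_uniq _ D (-u.2, u.1) (-v.2, v.1)).
  - by rewrite -d1 /dot /cross /=; ring.
  - by rewrite -d2 /dot /cross /=; ring.
  have e : cross v u = - cross (-u.2,u.1) (-v.2,v.1) by rewrite /cross /=; ring.
  by move: hc; rewrite e oppr_eq0.
rewrite /D /vsub => -[e1 e2]; apply: pt_eq => /=; apply/eqP; rewrite -subr_eq0; apply/eqP; by [].
Qed.

Lemma vsub0 (R : realFieldType) (P Q : point R) : vsub P Q = (0,0) -> P = Q.
Proof.
rewrite /vsub => -[e1 e2]; apply: pt_eq; apply/eqP; by rewrite -subr_eq0; apply/eqP.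
Qed.

Lemma sqdist0 (R : realFieldType) (P Q : point R) : sqdist P Q = 0 -> P = Q.
Proof.
rewrite /sqdist /dot => /sq2_eq0 [e1 e2]; apply: vsub0; apply: pt_eq => //.
Qed.

Lemma solve1 (R : realFieldType) (K x x0 L M : R) :
  K != 0 -> L = M -> K * (x - x0) = L - M -> x = x0.
Proof.
move=> hK hLM e; rewrite hLM subrr in e.
by move/eqP: e; rewrite mulf_eq0 (negbTE hK) /= subr_eq0 => /eqP.
Qed.

Lemma core (R : realFieldType) (a b c : R) (O H J Hs : point R) :
 ~ collinear (0,a) (b,0) (c,0) -> is_circumcenter O (0,a) (b,0) (c,0) ->
 is_orthocenter H (0,a) (b,0) (c,0) -> H <> (0,a) -> H <> (b,0) -> H <> (c,0) ->
 foot (b,0) (c,0) (0,a) <> foot (c,0) (0,a) (b,0) ->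
 collinear (0,a) O J -> collinear (foot (b,0) (c,0) (0,a)) (foot (c,0) (0,a) (b,0)) J ->
 ~ collinear (foot O (0,a) H) (foot O (b,0) H) (foot O (c,0) H) ->
 is_orthocenter Hs (foot O (0,a) H) (foot O (b,0) H) (foot O (c,0) H) ->
 collinear (foot (0,a) (b,0) (c,0)) J Hs.
Proof.
move=> nc [c1 c2] [o1 [o2 _]] HA HB HC BC cJ1 cJ2 ncs [s1 [s2 _]].
have ha : a != 0.
  apply/eqP => a0; apply: nc; rewrite /collinear /cross /vsub /= a0; ring.
have hbc : c - b != 0.
  apply/eqP => bc; apply: nc; rewrite /collinear /cross /vsub /=.
  have -> : c = b by apply/eqP; rewrite -subr_eq0 bc.
  ring.
have h2 : (2 : R) != 0 by rewrite pnatr_eq0.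
case: O c1 c2 cJ1 s1 s2 ncs => x y c1 c2 cJ1 s1 s2 ncs.
have ex : x = (b + c) / 2.
  apply: (@solve1 _ (2 * (c - b)) _ _ (sqdist (x,y) (b,0)) (sqdist (x,y) (c,0))).
  - by rewrite mulf_neq0.
  - by rewrite -c1 -c2.
  by rewrite /sqdist /dot /vsub /=; field.
subst x.
have ey : y = (a^2 + b * c) / (2 * a).
  apply: (@solve1 _ (- 2 * a) _ _ (sqdist ((b + c) / 2,y) (0,a)) (sqdist ((b + c) / 2,y) (b,0))).
  - by rewrite mulf_neq0 // oppr_eq0.
  - by rewrite -c1.
  by rewrite /sqdist /dot /vsub /=; field.
subst y.
case: H o1 o2 HA HB HC s1 s2 ncs => hx hy o1 o2 HA HB HC s1 s2 ncs.
have ehx : hx = 0.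
  apply: (@solve1 _ (c - b) _ _ (dot (vsub (hx,hy) (0,a)) (vsub (c,0) (b,0))) 0) => //.
  by rewrite /dot /vsub /=; ring.
subst hx.
have ehy : hy = - (b * c) / a.
  apply: (@solve1 _ (- a) _ _ (dot (vsub (0,hy) (b,0)) (vsub (c,0) (0,a))) 0) => //.
  - by rewrite oppr_eq0.
  by rewrite /dot /vsub /=; field.
subst hy.
have hb : b != 0.
  by apply/eqP => b0; apply: HB; apply: pt_eq => //=; rewrite b0; field.
have hc : c != 0.
  by apply/eqP => c0; apply: HC; apply: pt_eq => //=; rewrite c0; field.
have hk : a ^+ 2 + b * c != 0.
  apply/eqP => k; apply: HA; apply: pt_eq => //=.
  have -> : b * c = - a^+2 by nra.
  by field.
set O := (_ , (a ^+ 2 + b * c) / (2 * a)) in c1 c2 cJ1 s1 s2 ncs *.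
set H := (0, - (b * c) / a) in HA HB HC s1 s2 ncs o1 o2 *.
set As := foot O (0,a) H in s1 s2 ncs *.
set Bs := foot O (b,0) H in s1 s2 ncs *.
set Cs := foot O (c,0) H in s1 s2 ncs *.
set Hs0 := (As.1 + Bs.1 + Cs.1 - O.1 - H.1, As.2 + Bs.2 + Cs.2 - O.2 - H.2).
have hq1 : a^+2 + c^+2 != 0.
  by rewrite paddr_eq0 ?sqr_ge0 // negb_and sqrf_eq0 ha.
have hq2 : a^+2 + b^+2 != 0.
  by rewrite paddr_eq0 ?sqr_ge0 // negb_and sqrf_eq0 ha.
have n1 : - b * - b * (a * a) + - (b * c) * - (b * c) != 0.
  have -> : - b * - b * (a * a) + - (b * c) * - (b * c) = b^+2 * (a^+2 + c^+2) by ring.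
  by rewrite mulf_neq0 // sqrf_eq0.
have n2 : - c * - c * (a * a) + - (b * c) * - (b * c) != 0.
  have -> : - c * - c * (a * a) + - (b * c) * - (b * c) = c^+2 * (a^+2 + b^+2) by ring.
  by rewrite mulf_neq0 // sqrf_eq0.
have n3 : - (b * c) + - a * a != 0.
  have -> : - (b * c) + - a * a = - (a^+2 + b * c) by ring.
  by rewrite oppr_eq0.
have t1 : dot (vsub Hs0 As) (vsub Cs Bs) = 0.
  rewrite /Hs0 /As /Bs /Cs /O /H /foot /dot /vsub /=.
  by field; rewrite ha n1 n2 n3.
have t2 : dot (vsub Hs0 Bs) (vsub Cs As) = 0.
  rewrite /Hs0 /As /Bs /Cs /O /H /foot /dot /vsub /=.
  by field; rewrite ha n1 n2 n3.
have eHs : Hs = Hs0.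
  apply: vsub0; apply: (@dot_uniq _ _ (vsub Cs Bs) (vsub Cs As)).
  - have -> : dot (vsub Hs Hs0) (vsub Cs Bs) = dot (vsub Hs As) (vsub Cs Bs) - dot (vsub Hs0 As) (vsub Cs Bs).
      by rewrite /dot /vsub /=; ring.
    by rewrite s1 t1 subrr.
  - have -> : dot (vsub Hs Hs0) (vsub Cs As) = dot (vsub Hs Bs) (vsub Cs As) - dot (vsub Hs0 Bs) (vsub Cs As).
      by rewrite /dot /vsub /=; ring.
    by rewrite s2 t2 subrr.
  have -> : cross (vsub Cs Bs) (vsub Cs As) = - cross (vsub Bs As) (vsub Cs As).
    by rewrite /cross /vsub /=; ring.
  by rewrite oppr_eq0; apply/eqP.
set A0 : point R := (0, a) in cJ1 c1 c2 *.
set BH := foot (b,0) (c,0) A0 in BC cJ2 *.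
set CH := foot (c,0) A0 (b,0) in BC cJ2 *.
have hOA : vsub O A0 <> (0,0).
  move/vsub0 => eO.
  have : sqdist A0 (b,0) = 0 by rewrite -eO -c1 eO /sqdist /dot /vsub /=; ring.
  move/sqdist0 => [] b0; by move: hb; rewrite b0 eqxx.
have hBC : vsub CH BH <> (0,0) by move/vsub0 => e; apply: BC.
have hcr : cross (vsub CH BH) (vsub O A0) != 0.
  apply/eqP => e.
  have hd : dot (vsub CH BH) (vsub O A0) = 0.
    rewrite /CH /BH /O /A0 /foot /dot /vsub /=.
    field.
    have -> : - c * - c + a * a = a^+2 + c^+2 by ring.
    have -> : b * b + - a * - a = a^+2 + b^+2 by ring.
    by rewrite ha hq1 hq2.
  by case: (@perp_cross0 _ _ _ hd e).
have n4 : - c * - c + a * a != 0.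
  by have -> : - c * - c + a * a = a^+2 + c^+2 by ring.
have n5 : b * b + - a * - a != 0.
  by have -> : b * b + - a * - a = a^+2 + b^+2 by ring.
have hX : (((c * b + - a * - a) * b * (- c * - c + a * a) +
       - (c * (- c * - c + a * a) + (b - c) * - c * - c) *
       (b * b + - a * - a)) *
      (a ^+ 2 + b * c + - a * (2 * a)) +
      -
      (((a * (b * b + - a * - a) + (c * b + - a * - a) * - a) *
        (- c * - c + a * a) + - ((b - c) * - c * a) * (b * b + - a * - a)) *
       (b + c)) *
      a) != 0.
  have -> : (((c * b + - a * - a) * b * (- c * - c + a * a) +
       - (c * (- c * - c + a * a) + (b - c) * - c * - c) *
       (b * b + - a * - a)) *
      (a ^+ 2 + b * c + - a * (2 * a)) +
      -
      (((a * (b * b + - a * - a) + (c * b + - a * - a) * - a) *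
        (- c * - c + a * a) + - ((b - c) * - c * a) * (b * b + - a * - a)) *
       (b + c)) *
      a) = cross (vsub CH BH) (vsub O A0) * ((b * b + - a * - a) * (- c * - c + a * a) * (2 * a)).
    rewrite /CH /BH /O /A0 /foot /dot /cross /vsub /=.
    by field; rewrite ha n4 n5.
  by rewrite !mulf_neq0.
have eJ := @line_inter _ _ _ _ _ _ cJ1 cJ2 hcr.
rewrite eHs eJ /collinear /Hs0 /As /Bs /Cs /BH /CH /A0 /O /H /foot /dot /cross /vsub /=.
by field; rewrite hbc ha n1 n2 n3 n4 n5 hX.
Qed.

Lemma core' (R : realFieldType) (A B C O H J Hs : point R) :
 A.1 = 0 -> B.2 = 0 -> C.2 = 0 ->
 ~ collinear A B C -> is_circumcenter O A B C ->
 is_orthocenter H A B C -> H <> A -> H <> B -> H <> C ->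
 foot B C A <> foot C A B ->
 collinear A O J -> collinear (foot B C A) (foot C A B) J ->
 ~ collinear (foot O A H) (foot O B H) (foot O C H) ->
 is_orthocenter Hs (foot O A H) (foot O B H) (foot O C H) ->
 collinear (foot A B C) J Hs.
Proof.
case: A => [x a]; case: B => [b y]; case: C => [c z] /= -> -> ->.
exact: core.
Qed.

Definition Lm (R : realFieldType) (p q : R) (u : point R) : point R :=
  (p * u.1 + q * u.2, - q * u.1 + p * u.2).
Arguments Lm {R}.
Definition Tr (R : realFieldType) (p q : R) (t X : point R) : point R := Lm p q (vsub X t).
Arguments Tr {R}.

Lemma vsub_Tr (R : realFieldType) (p q : R) (t X Y : point R) :
  vsub (Tr p q t X) (Tr p q t Y) = Lm p q (vsub X Y).
Proof. by apply: pt_eq; rewrite /Tr /Lm /vsub /=; ring. Qed.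

Lemma dot_Lm (R : realFieldType) (p q : R) (u v : point R) :
  dot (Lm p q u) (Lm p q v) = (p * p + q * q) * dot u v.
Proof. by rewrite /Lm /dot /=; ring. Qed.

Lemma cross_Lm (R : realFieldType) (p q : R) (u v : point R) :
  cross (Lm p q u) (Lm p q v) = (p * p + q * q) * cross u v.
Proof. by rewrite /Lm /cross /=; ring. Qed.

Lemma collinear_Tr (R : realFieldType) (p q : R) (t P Q X : point R) :
  p * p + q * q != 0 ->
  collinear (Tr p q t P) (Tr p q t Q) (Tr p q t X) <-> collinear P Q X.
Proof.
move=> hk; rewrite /collinear !vsub_Tr cross_Lm; split.
  by move/eqP; rewrite mulf_eq0 (negbTE hk) => /eqP.
by move=> ->; rewrite mulr0.
Qed.

Lemma circ_Tr (R : realFieldType) (p q : R) (t O A B C : point R) :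
  is_circumcenter O A B C ->
  is_circumcenter (Tr p q t O) (Tr p q t A) (Tr p q t B) (Tr p q t C).
Proof. by rewrite /is_circumcenter /sqdist !vsub_Tr !dot_Lm => -[-> ->]. Qed.

Lemma orth_Tr (R : realFieldType) (p q : R) (t H A B C : point R) :
  is_orthocenter H A B C ->
  is_orthocenter (Tr p q t H) (Tr p q t A) (Tr p q t B) (Tr p q t C).
Proof.
by rewrite /is_orthocenter !vsub_Tr !dot_Lm => -[-> [-> ->]]; rewrite !mulr0.
Qed.

Lemma foot_Tr (R : realFieldType) (p q : R) (t P A B : point R) :
  p * p + q * q != 0 ->
  foot (Tr p q t P) (Tr p q t A) (Tr p q t B) = Tr p q t (foot P A B).
Proof.
move=> hk; rewrite /foot !vsub_Tr !dot_Lm.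
have -> : (p * p + q * q) * dot (vsub P A) (vsub B A) /
          ((p * p + q * q) * dot (vsub B A) (vsub B A)) =
          dot (vsub P A) (vsub B A) / dot (vsub B A) (vsub B A).
  case: (eqVneq (dot (vsub B A) (vsub B A)) 0) => [->|nz].
    by rewrite mulr0 !invr0 !mulr0.
  by field; rewrite hk nz.
set s := _ / _.
by apply: pt_eq; rewrite /Tr /Lm /vsub /=; ring.
Qed.

Lemma Tr_inj (R : realFieldType) (p q : R) (t X Y : point R) :
  p * p + q * q != 0 -> Tr p q t X = Tr p q t Y -> X = Y.
Proof.
move=> hk e.
have h0 : dot (vsub (Tr p q t X) (Tr p q t Y)) (vsub (Tr p q t X) (Tr p q t Y)) = 0.
  by rewrite e /dot /vsub /= subrr; ring.
move: h0; rewrite vsub_Tr dot_Lm => /eqP; rewrite mulf_eq0 (negbTE hk) /= => /eqP.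
by rewrite /dot => /sq2_eq0 [h1 h2]; apply: vsub0; apply: pt_eq.
Qed.

Theorem lemma4p1 (R : realFieldType) (A B C O H J Hs : point R) :
  ~ collinear A B C ->
  is_circumcenter O A B C ->
  is_orthocenter H A B C ->
  (* lines AH, BH, CH exist *)
  H <> A -> H <> B -> H <> C ->
  let AH := foot A B C in
  let BH := foot B C A in
  let CH := foot C A B in
  let As := foot O A H in
  let Bs := foot O B H in
  let Cs := foot O C H in
  (* line B_H C_H exists, and J is the intersection of lines AO and B_H C_H *)
  BH <> CH ->
  collinear A O J -> collinear BH CH J ->
  (* H* is the orthocenter of the (nondegenerate) triangle A*B*C* *)
  ~ collinear As Bs Cs ->
  is_orthocenter Hs As Bs Cs ->
  collinear AH J Hs.
Proof.
move=> nc circ orth hA hB hC AH BH CH As Bs Cs hBC cJ1 cJ2 ncs os.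
set p := (vsub C B).1; set q := (vsub C B).2.
have hk : p * p + q * q != 0.
  apply/eqP => /sq2_eq0 [h1 h2].
  have eCB : C = B by apply: vsub0; apply: pt_eq.
  by apply: nc; rewrite eCB /collinear /cross /vsub /=; ring.
set T := Tr p q AH.
have F : forall X Y Z, foot (T X) (T Y) (T Z) = T (foot X Y Z) by move=> *; exact: foot_Tr.
have CL : forall X Y Z, collinear (T X) (T Y) (T Z) <-> collinear X Y Z by move=> *; exact: collinear_Tr.
have I : forall X Y, X <> Y -> T X <> T Y by move=> X Y nXY /(@Tr_inj _ _ _ _ _ _ hk).
have hd : (C.1 - B.1) * (C.1 - B.1) + (C.2 - B.2) * (C.2 - B.2) != 0 by exact: hk.
have eA : (T A).1 = 0.
  rewrite /T /Tr /Lm /AH /foot /dot /p /q /vsub /=.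
  by field; exact: hd.
have eB : (T B).2 = 0.
  by rewrite /T /Tr /Lm /AH /foot /dot /p /q /vsub /=; ring.
have eC : (T C).2 = 0.
  by rewrite /T /Tr /Lm /AH /foot /dot /p /q /vsub /=; ring.
apply: (proj1 (CL AH J Hs)).
rewrite /AH -F.
apply: (@core' _ (T A) (T B) (T C) (T O) (T H) (T J) (T Hs) eA eB eC).
- by move/CL.
- exact: circ_Tr.
- exact: orth_Tr.
- exact: I.
- exact: I.
- exact: I.
- by rewrite !F; apply: I.
- by apply/CL.
- by rewrite !F; apply/CL.
- by rewrite !F; move/CL.
- by rewrite !F; apply: orth_Tr.
Qed.
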